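(* Let $\alpha,\beta$ be sets and $\odot:\beta\times\beta\to\beta$. Calls $\mathrm{reduceByKey}(\odot,\mathit{pairRdd})$ (with pair RDDs over $\alpha\times\beta$) have deterministic outcomes if and only if calls $\mathrm{reduce}(\odot,\mathit{rdd})$ (with RDDs over $\beta$) have deterministic outcomes.
   Context: Lists are finite; $\mathbin{+\!\!+}$ is concatenation. $\mathrm{foldl}(f,b,[\,])=b$, $\mathrm{foldl}(f,b,[x_1,\dots,x_n])=f(\cdots f(f(b,x_1),x_2)\cdots,x_n)$; $\mathrm{reducel}(f,[x_1,\dots,x_n])=\mathrm{foldl}(f,x_1,[x_2,\dots,x_n])$ for nonempty lists. An RDD over $X$ is a list of lists over $X$; a pair RDD is an RDD over $\alpha\times\beta$ (key, value). A partitioning is a function $P$ sending each list $L$ to an RDD obtained by splitting $L$ into consecutive pieces $p_1,\dots,p_n$ with $p_1\mathbin{+\!\!+}\cdots\mathbin{+\!\!+}p_n=L$ and then arbitrarily permuting $[p_1,\dots,p_n]$ (for $\mathrm{reduce}$, $L$ is nonempty and all pieces are nonempty). $\mathrm{filterkey}(k,L)$ is the list of values $v$ of the pairs $(k,v)$ in $L$, in order. $\mathrm{reduce}_{\mathrm{det}}(\odot,[q_1,\dots,q_m])=\mathrm{reducel}(\odot,[\mathrm{reducel}(\odot,q_1),\dots,\mathrm{reducel}(\odot,q_m)])$; calls to $\mathrm{reduce}$ have deterministic outcomes if $\mathrm{reduce}_{\mathrm{det}}(\odot,P(L))=\mathrm{reducel}(\odot,L)$ for all nonempty $L$ over $\beta$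 and all such partitionings $P$. $\mathrm{reduceByKey}_{\mathrm{det}}(\odot,[q_1,\dots,q_m])$ is a pair RDD in which each key $k$ occurring in some $q_i$ appears exactly once, with value $\mathrm{reducel}(\odot,[c_{i_1},\dots,c_{i_r}])$, where $i_1<\dots<i_r$ are the indices $i$ with $k$ occurring in $q_i$ and $c_i=\mathrm{reducel}(\odot,\mathrm{filterkey}(k,q_i))$; $\mathrm{lookup}(k,R)$ denotes the value associated with key $k$ in the pair RDD $R$. Calls $\mathrm{reduceByKey}(\odot,\mathit{pairRdd})$ have deterministic outcomes if $\mathrm{lookup}(k,\mathrm{reduceByKey}_{\mathrm{det}}(\odot,P(L)))=\mathrm{reducel}(\odot,\mathrm{filterkey}(k,L))$ for all lists $L$ of pairs, partitionings $P$, and keys $k$ occurring in $L$. *)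

(* Defs.v *)
(* Classical decidable equality is used for keys (sets in the
   paper have classical, hence decidable, equality). *)
From Stdlib Require Import List Permutation ClassicalEpsilon.
Import ListNotations.
Set Implicit Arguments.

Definition ceq_dec (T : Type) (x y : T) : {x = y} + {x <> y} :=
  excluded_middle_informative (x = y).

(* reducel(f, [x1,...,xn]) = foldl(f, x1, [x2,...,xn]); None on the empty
   list (where reducel is undefined). *)
Definition reducel (B : Type) (f : B -> B -> B) (L : list B) : option B :=
  match L with
  | [] => None
  | x :: xs => Some (fold_left f xs x)
  end.

Definition opt_to_list (B : Type) (o : option B) : list B :=
  match o with Some b => [b] | None => [] end.

(* reduce_det(f, [q1..qm]) = reducel(f, [reducel(f,q1),...,reducel(f,qm)])
   (pieces are nonempty for reduce, so every reducel(f,qi) is defined) *)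
Definition reduce_det (B : Type) (f : B -> B -> B) (qs : list (list B)) : option B :=
  reducel f (flat_map (fun q => opt_to_list (reducel f q)) qs).

Definition filterkey (A B : Type) (k : A) (L : list (A * B)) : list B :=
  map snd (filter (fun p => if ceq_dec (fst p) k then true else false) L).

Fixpoint dedup (A : Type) (l : list A) : list A :=
  match l with
  | [] => []
  | x :: xs => x :: filter (fun y => if ceq_dec y x then false else true) (dedup xs)
  end.

(* the value for key k: reducel over [c_{i1},...,c_{ir}], where i1<...<ir are
   the indices of the pieces in which k occurs, c_i = reducel(f, filterkey k q_i) *)
Definition key_value (A B : Type) (f : B -> B -> B) (qs : list (list (A * B))) (k : A)
  : option B :=
  reducel f (flat_map (fun q => opt_to_list (reducel f (filterkey k q))) qs).

(* reduceByKey_det(f, [q1..qm]) : a pair RDD (here as a single list of pairs)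
   in which each key occurring in some q_i appears exactly once *)
Definition reduceByKey_det (A B : Type) (f : B -> B -> B) (qs : list (list (A * B)))
  : list (A * B) :=
  flat_map (fun k => match key_value f qs k with
                     | Some v => [(k, v)]
                     | None => [] end)
           (dedup (map fst (concat qs))).

Definition lookup (A B : Type) (k : A) (R : list (A * B)) : option B :=
  option_map snd (find (fun p => if ceq_dec (fst p) k then true else false) R).

Definition partitioning (X : Type) (P : list X -> list (list X)) : Prop :=
  forall L, exists ps, concat ps = L /\ Permutation ps (P L).

Definition partitioning_ne (X : Type) (P : list X -> list (list X)) : Prop :=
  forall L, L <> [] ->
    exists ps, Forall (fun p => p <> []) ps /\ concat ps = L /\ Permutation ps (P L).

Definition reduce_deterministic (B : Type) (f : B -> B -> B) : Prop :=
  forall (P : list B -> list (list B)), partitioning_ne P ->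
    forall L : list B, L <> [] -> reduce_det f (P L) = reducel f L.

Definition reduceByKey_deterministic (A B : Type) (f : B -> B -> B) : Prop :=
  forall (P : list (A * B) -> list (list (A * B))), partitioning P ->
    forall (L : list (A * B)) (k : A), In k (map fst L) ->
      lookup k (reduceByKey_det f (P L)) = reducel f (filterkey k L).

(* Main.v *)
Require Import Defs.
From Stdlib Require Import List Permutation ClassicalEpsilon.
Import ListNotations.

Lemma lookup_fm (A B : Type) (h : A -> option B) (k : A) (l : list A) :
  lookup k (flat_map (fun k' => match h k' with Some v => [(k', v)] | None => [] end) l)
  = if excluded_middle_informative (In k l) then h k else None.
Proof.
  induction l as [|x l IH]; simpl.
  - destruct (excluded_middle_informative False); [contradiction|reflexivity].
  - destruct (excluded_middle_informative (x = k \/ In k l)) as [H|H];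
    destruct (excluded_middle_informative (In k l)) as [H'|H'] in IH;
    unfold lookup in *; simpl;
    (destruct (h x) eqn:E; simpl;
      [destruct (ceq_dec x k); simpl; [subst; try rewrite E; auto|] | ]);
    try (rewrite IH); try tauto.
    all: try (destruct H as [->|H]; [|tauto]; congruence).
    all: try (destruct H as [->|H]; [congruence|tauto]).
    all: exfalso; tauto.
Qed.

Lemma in_dedup (A : Type) (l : list A) x : In x (dedup l) <-> In x l.
Proof.
  induction l as [|y l IH]; simpl; [tauto|].
  rewrite filter_In, IH.
  destruct (ceq_dec x y); subst; simpl; intuition; try discriminate.
Qed.

Lemma lookup_rbk (A B : Type) (f : B -> B -> B) qs (k : A) :
  In k (map fst (concat qs)) ->
  lookup k (reduceByKey_det f qs) = key_value f qs k.
Proof.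
  intro H. unfold reduceByKey_det. rewrite lookup_fm.
  destruct (excluded_middle_informative _) as [_|n]; auto.
  exfalso; apply n, in_dedup, H.
Qed.

Lemma filterkey_pair (A B : Type) (a : A) (q : list B) :
  filterkey a (map (pair a) q) = q.
Proof.
  induction q; simpl; auto. unfold filterkey in *; simpl.
  destruct (ceq_dec a a); [|congruence]. simpl. f_equal; auto.
Qed.

Lemma filterkey_concat (A B : Type) (k : A) (ps : list (list (A * B))) :
  filterkey k (concat ps) = concat (map (filterkey k) ps).
Proof.
  induction ps; simpl; auto. unfold filterkey in *.
  rewrite filter_app, map_app, IHps. auto.
Qed.

Lemma flat_map_map {X Y Z} (g : Y -> list Z) (h : X -> Y) (l : list X) :
  flat_map g (map h l) = flat_map (fun x => g (h x)) l.
Proof. induction l; simpl; auto. f_equal; auto. Qed.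

Lemma perm_filter {X} (g : X -> bool) (l l' : list X) :
  Permutation l l' -> Permutation (filter g l) (filter g l').
Proof.
  induction 1; simpl; auto.
  - destruct (g x); auto.
  - destruct (g x), (g y); auto. constructor.
  - eapply Permutation_trans; eauto.
Qed.

Definition nonempty {X} (l : list X) : bool := match l with [] => false | _ => true end.

Lemma fm_filter (B : Type) (f : B -> B -> B) (qs : list (list B)) :
  flat_map (fun q => opt_to_list (reducel f q)) (filter nonempty qs)
  = flat_map (fun q => opt_to_list (reducel f q)) qs.
Proof.
  induction qs as [|q qs IH]; simpl; auto. destruct q; simpl; auto. f_equal; auto.
Qed.

Theorem proposition4 (A B : Type) (HA : inhabited A) (f : B -> B -> B) :
  reduceByKey_deterministic A f <-> reduce_deterministic f.
Proof.
  split.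
  - intros H P HP L HL. destruct HA as [a].
    set (P' := fun M : list (A * B) =>
      if ceq_dec M (map (pair a) L) then map (map (pair a)) (P L) else [M]).
    assert (HP' : partitioning P').
    { intro M. unfold P'. destruct (ceq_dec M (map (pair a) L)) as [->|n].
      - destruct (HP L HL) as [ps [_ [Hc Hp]]].
        exists (map (map (pair a)) ps). split.
        + rewrite <- Hc. rewrite concat_map. reflexivity.

        + apply Permutation_map; auto.
      - exists [M]. simpl. rewrite app_nil_r. auto. }
    assert (Hin : In a (map fst (map (pair a) L))).
    { destruct L; [congruence|]. simpl; auto. }
    specialize (H P' HP' (map (pair a) L) a Hin).
    rewrite filterkey_pair in H. rewrite <- H.
    unfold P' in *. destruct (ceq_dec _ _) as [_|n]; [|congruence].
    rewrite lookup_rbk.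
    + unfold key_value, reduce_det. f_equal. rewrite flat_map_map.
      apply flat_map_ext. intro q. rewrite filterkey_pair. auto.
    + destruct (HP L HL) as [ps [_ [Hc Hp]]].
      destruct L as [|x L]; [congruence|].
      assert (Hx : In x (concat ps)) by (rewrite Hc; simpl; auto).
      apply in_concat in Hx. destruct Hx as [q [Hq Hxq]].
      apply in_map_iff. exists (a, x). split; auto.
      apply in_concat. exists (map (pair a) q). split.
      * apply in_map. eapply Permutation_in; eauto.
      * apply in_map; auto.
  - intros H P HP L k Hk.
    destruct (HP L) as [ps [Hc Hp]].
    set (L' := filterkey k L).
    set (qs' := filter nonempty (map (filterkey k) (P L))).
    set (P0 := fun M : list B => if ceq_dec M L' then qs' else [M]).
    assert (HL' : L' <> []).
    { unfold L', filterkey. apply in_map_iff in Hk. destruct Hk as [[k' v] [Hk Hin]].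
      simpl in Hk; subst k'. intro E.
      assert (In v (map snd (filter (fun p => if ceq_dec (fst p) k then true else false) L))).
      { apply in_map_iff. exists (k, v). split; auto. apply filter_In. split; auto.
        simpl. destruct (ceq_dec k k); congruence. }
      rewrite E in H0; auto. }
    assert (HP0 : partitioning_ne P0).
    { intros M HM. unfold P0. destruct (ceq_dec M L') as [->|n].
      - exists (filter nonempty (map (filterkey k) ps)). repeat split.
        + apply Forall_forall. intros x Hx. apply filter_In in Hx. destruct Hx as [_ Hx].
          destruct x; simpl in *; congruence.
        + unfold L'. rewrite <- Hc, filterkey_concat. generalize (map (filterkey k) ps).
          induction l as [|x l IH]; simpl; auto. destruct x; simpl; auto. rewrite IH; auto.
        + unfold qs'. apply perm_filter, Permutation_map; auto.
      - exists [M]. simpl. rewrite app_nil_r. repeat split; auto. }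
    specialize (H P0 HP0 L' HL'). unfold P0 in H.
    destruct (ceq_dec L' L') as [_|n]; [|congruence].
    fold L'. rewrite <- H. rewrite lookup_rbk.
    + unfold key_value, reduce_det, qs'. rewrite fm_filter, flat_map_map. auto.
    + apply in_map_iff in Hk. destruct Hk as [x [Hx Hin]].
      apply in_map_iff. exists x. split; auto.
      rewrite <- Hc in Hin. apply in_concat in Hin. destruct Hin as [q [Hq Hxq]].
      apply in_concat. exists q. split; auto. eapply Permutation_in; eauto.
Qed.
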